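(* Let $q$ be an odd prime power, let $1\le n\le q^2-2$, and write $n=u+vq$ with $0\le u,v\le q-1$. Define \[ \mathrm{I}=\sum_{\substack{k\ge 1,\ j\ge 0\\ k+j\le q-1\\ 2k-j\equiv 0\pmod{q-1}\\ q(q-1)+k-j=n}}\binom{q-1-k}{j}(-1)^j . \] Then \[ \mathrm{I}=\sum_{\max\{-1,\,v-q+\frac{u+v}{q-1}\}<s\le v-q+\frac{u+v}{q-1}+1}\binom{u+v-(s-v+q-1)(q-1)}{(s-2v+2q)(q-1)-2(u+v)}, \] the sum being over integers $s$ in the indicated range.
   Context: For integers $m\ge 0$ and $k$, $\binom mk$ is the usual binomial coefficient, equal to $0$ unless $0\le k\le m$. *)

(* Defs.v *)
From mathcomp Require Import all_boot all_order all_algebra.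
Import Order.TTheory GRing.Theory Num.Theory.
Local Open Scope ring_scope.

Definition binz (m k : int) : int :=
  if (0 <= m) && (0 <= k) then ('C(absz m, absz k))%:Z else 0.

(* Main.v *)
Require Import Defs.
From mathcomp Require Import all_boot all_order all_algebra.
From mathcomp Require Import zify ring lra.
Import Order.TTheory GRing.Theory Num.Theory.
Local Open Scope ring_scope.

Lemma tcond (q u v : nat) (s : int) : (1 < q)%N ->
  let t : rat := v%:R - q%:R + (u + v)%:R / (q - 1)%:R in
  ((Num.max (-1) t < s%:~R) && (s%:~R <= t + 1)) =
  [&& -1 < s,
      (v%:Z - q%:Z) * (q%:Z - 1) + (u + v)%:Z < s * (q%:Z - 1) &
      s * (q%:Z - 1) <= (v%:Z - q%:Z) * (q%:Z - 1) + (u + v)%:Z + (q%:Z - 1)].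
Proof.
move=> hq t.
have c0 : (0 : rat) < (q - 1)%:R by rewrite ltr0n; lia.
rewrite gt_max -andbA; congr [&& _, _ & _].
  by rewrite -(ltr_int rat).
  rewrite /t -(ltr_pM2r c0) -subr_gt0 -[X in _ = X]subr_gt0.
  rewrite -(ltr_int rat) -subr_gt0.
  rewrite !mulrDl divfK ?gt_eqF //.
  rewrite natrB; last lia.
  apply: congr1.
  ring.
rewrite /t -(ler_pM2r c0) -subr_ge0 -[X in _ = X]subr_ge0.
rewrite -(ler_int rat) -subr_ge0.
rewrite !mulrDl divfK ?gt_eqF //.
rewrite natrB; last lia.
apply: congr1.
ring.
Qed.

Lemma sum1 (N a : nat) (e : bool) (c : int) :
  \sum_(i < N) (if ((i : nat) == a) && e then c else 0) = if (a < N)%N && e then c else 0.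
Proof.
case: e; last by rewrite andbF big1 // => i _; rewrite andbF.
rewrite andbT; case: (ltnP a N) => h.
  rewrite (bigD1 (Ordinal h)) //= eqxx big1 ?addr0 // => i hi.
  case: eqP => // ei; move: hi; rewrite -val_eqE /= ei eqxx.
  done.
rewrite big1 // => i _; case: eqP => // ei; move: (ltn_ord i); rewrite ei; lia.
Qed.

Lemma sum2 (N a b : nat) (e : bool) (c : int) :
  \sum_(k < N) \sum_(j < N) (if [&& (k : nat) == a, (j : nat) == b & e] then c else 0)
  = if [&& a < N, b < N & e]%N then c else 0.
Proof.
transitivity (\sum_(k < N) (if ((k : nat) == a) && ((b < N)%N && e) then c else 0)).
  apply: eq_bigr => k _.
  rewrite (_ : ((k:nat) == a) && ((b < N)%N && e) = (b < N)%N && (((k:nat) == a) && e)); last first.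
    by case: (k == a :> nat); case: (b < N)%N.
  rewrite -(sum1 N b (((k : nat) == a) && e) c).
  apply: eq_bigr => j _; by case: (j == b :> nat); case: (k == a :> nat).
by rewrite sum1.
Qed.

Lemma dvd3 (Q x : int) : 0 < Q -> - Q < x <= 2 * Q ->
  (Q %| x)%Z = [|| x == 0, x == Q | x == 2 * Q].
Proof.
move=> hQ hx; apply/idP/idP.
  move/dvdzP => [m xm]; subst x.
  have h1 : -1 < m.
    rewrite ltNge; apply/negP => hm; move: hx => /andP[hx _].
    have : m * Q <= - Q by rewrite -mulN1r ler_wpM2r // ltW.
    lia.
  have h2 : m < 3.
    rewrite ltNge; apply/negP => hm; move: hx => /andP[_ hx].
    have : 3 * Q <= m * Q by rewrite ler_wpM2r // ltW.
    lia.
  have : m = 0 \/ m = 1 \/ m = 2 by lia.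
  by case=> [->|[->|->]]; rewrite ?mul0r ?mul1r ?eqxx ?orbT.
case/or3P => /eqP ->; rewrite ?dvdz0 ?dvdzz //.
by rewrite dvdz_mull.
Qed.

Lemma pin (s Q A m : int) : 0 < Q -> m * Q <= A < (m + 1) * Q ->
  (A < s * Q) && (s * Q <= A + Q) = (s == m + 1).
Proof.
move=> hQ /andP[h1 h2]; apply/idP/eqP => [/andP[h3 h4]|->].
  have e1 : m < s by rewrite -(ltr_pM2r hQ); lia.
  have e2 : s < m + 2 by rewrite -(ltr_pM2r hQ); lia.
  lia.
lia.
Qed.

Definition Lf (q n k j : nat) : int :=
     (if [&& (1 <= k)%N, (k + j <= q - 1)%N,
            ((q - 1)%:Z %| 2 * k%:Z - j%:Z)%Z
          & (q * (q - 1))%:Z + k%:Z - j%:Z == n%:Z]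
      then ('C(q - 1 - k, j))%:Z * (-1) ^+ j else 0).

Definition Rf (q u v i : nat) : int :=
     (let s : int := i%:Z - (2 * q)%:Z in
      let t : rat := v%:R - q%:R + (u + v)%:R / (q - 1)%:R in
      if (Num.max (-1) t < s%:~R) && (s%:~R <= t + 1)
      then binz ((u + v)%:Z - (s - v%:Z + q%:Z - 1) * (q%:Z - 1))
                ((s - 2 * v%:Z + 2 * q%:Z) * (q%:Z - 1) - 2 * (u + v)%:Z)
      else 0).

Lemma Lf_dvd (q n k j : nat) : (2 <= q)%N -> (1 <= k)%N -> (k + j <= q - 1)%N ->
  Lf q n k j = if [|| 2 * k%:Z - j%:Z == 0, 2 * k%:Z - j%:Z == (q%:Z - 1)
                   | 2 * k%:Z - j%:Z == 2 * (q%:Z - 1)]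
                  && ((q * (q - 1))%:Z + k%:Z - j%:Z == n%:Z)
               then ('C(q - 1 - k, j))%:Z * (-1) ^+ j else 0.
Proof.
move=> hq h1 h2; rewrite /Lf h1 h2 /=.
rewrite (_ : (q - 1)%:Z = q%:Z - 1); last lia.
rewrite dvd3 //; lia.
Qed.

Theorem lemma4p1 (q n u v : nat) :
  (exists p e : nat, [/\ prime p, (0 < e)%N & q = (p ^ e)%N]) -> odd q ->
  (1 <= n <= q ^ 2 - 2)%N -> (u <= q - 1)%N -> (v <= q - 1)%N ->
  n = (u + v * q)%N ->
  \sum_(k < q) \sum_(j < q)
     (if [&& (1 <= k)%N, (k + j <= q - 1)%N,
            ((q - 1)%:Z %| 2 * k%:Z - j%:Z)%Z
          & (q * (q - 1))%:Z + k%:Z - j%:Z == n%:Z]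
      then ('C(q - 1 - k, j))%:Z * (-1) ^+ j else 0)
  =
  \sum_(i < 4 * q)
     (let s : int := i%:Z - (2 * q)%:Z in
      let t : rat := v%:R - q%:R + (u + v)%:R / (q - 1)%:R in
      if (Num.max (-1) t < s%:~R) && (s%:~R <= t + 1)
      then binz ((u + v)%:Z - (s - v%:Z + q%:Z - 1) * (q%:Z - 1))
                ((s - 2 * v%:Z + 2 * q%:Z) * (q%:Z - 1) - 2 * (u + v)%:Z)
      else 0).
Proof.
move=> [p [e [pp e0 qE]]] oq /andP[n1 n2] hu hv hn.
change (\sum_(k < q) \sum_(j < q) Lf q n k j = \sum_(i < 4 * q) Rf q u v i).
have hq3 : (3 <= q)%N.
  have p2 := prime_gt1 pp.
  have : (p <= q)%N by rewrite qE -{1}(expn1 p) leq_pexp2l // ltnW.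
  lia.
have qq : (q ^ 2 = q * q)%N by rewrite expnS expn1.
rewrite qq in n2.
have Lf0 : forall k j : nat, Lf q n k j =
   if (1 <= k)%N && (k + j <= q - 1)%N then Lf q n k j else 0.
  move=> k j; case: ifP => // /negbT /nandP h.
  by rewrite /Lf; case: h => /negbTE ->; rewrite ?andbF.
have [vA|[vB|vC]] : v = (q - 1)%N \/ v = (q - 2)%N \/ (v <= q - 3)%N by lia.
- have en : forall k j : nat, ((q * (q - 1))%:Z + k%:Z - j%:Z == n%:Z) = (k == j + u)%N.
    move=> k j; rewrite hn vA mulnC; apply/eqP/eqP; lia.
  have hu2 : (u <= q - 2)%N by move: n2; rewrite hn vA; nia.
  rewrite (eq_bigr (fun k : 'I_q => \sum_(j < q) (if [&& (k:nat) == (q-1-u)%N, (j:nat) == (q-1-2*u)%N & (2*u <= q-1)%N && (q-1 <= 3*u)%N] then ('C(u, q-1-2*u))%:Z else 0))); last first.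
    move=> k _; apply: eq_bigr => j _.
    have hk := ltn_ord k; have hj := ltn_ord j.
    rewrite Lf0; case: ifP => [/andP[h1 h2]|/negbT/nandP h]; last first.
      case: ifP => // /and3P[/eqP ek /eqP ej /andP[a b]]; exfalso; lia.
    rewrite Lf_dvd 1?en //; last lia.
    case: ifP => [/andP[H1 /eqP H2]|/negbT H]; case: ifP => [/and3P[/eqP ek /eqP ej /andP[a b]]|/negbT H'].
    + rewrite ek ej (_ : (q-1-(q-1-u) = u)%N); last lia.
      rewrite -signr_odd (_ : odd (q-1-2*u) = false); last lia.
      by rewrite expr0 mulr1.
    + exfalso; lia.
    + exfalso; lia.
    + done.
  rewrite sum2.
  have vZ : v%:Z = q%:Z - 1 by rewrite vA; lia.
  rewrite (eq_bigr (fun i : 'I_(4*q) => if ((i:nat) == (2*q+1)%N) && true then binz u%:Z (q%:Z - 1 - 2*u%:Z) else 0)); last first.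
    move=> i _; rewrite /Rf; cbv zeta. rewrite tcond; last lia.
    have eA : (v%:Z - q%:Z) * (q%:Z - 1) + (u + v)%:Z = u%:Z by rewrite PoszD vZ; ring.
    rewrite eA andbT.
    rewrite (@pin (i%:Z - (2*q)%:Z) (q%:Z-1) u%:Z 0); [|lia|lia].
    have hi := ltn_ord i.
    case: ifP => [/andP[c1 /eqP c2]|/negbT H]; case: ifP => [/eqP ei|/negbT H'].
    + rewrite ei; congr binz; rewrite ?PoszD ?PoszM vZ; ring.
    + exfalso; lia.
    + exfalso; move: H; rewrite ei; lia.
    + done.
  rewrite sum1.
  rewrite (_ : (2*q+1 < 4*q)%N = true) /=; last lia.
  rewrite /binz.
  case: (leqP (2*u) (q-1)) => h2u.
    rewrite (_ : q%:Z - 1 - 2*u%:Z = (q-1-2*u)%N%:Z); last lia.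
    rewrite !absz_nat /=.
    case: (leqP (q-1) (3*u)) => h3.
      by rewrite ifT //; apply/and3P; split; lia.
    rewrite ifF; last by apply/negbTE; lia.
    by rewrite bin_small //; lia.
  rewrite ifF; last by apply/negbTE; lia.
  rewrite ifF //; apply/negbTE; lia.
- have en : forall k j : nat, ((q * (q - 1))%:Z + k%:Z - j%:Z == n%:Z) = (j == k + (q - u))%N.
    move=> k j; rewrite hn vB; apply/eqP/eqP.
      have e3 : ((q-2)*q + q = q*(q-1))%N.
        by rewrite -[X in (_ + X)%N]mul1n -mulnDl mulnC; congr (_ * _)%N; lia.
      lia.
    have e3 : ((q-2)*q + q = q*(q-1))%N.
      by rewrite -[X in (_ + X)%N]mul1n -mulnDl mulnC; congr (_ * _)%N; lia.
    lia.
  rewrite (eq_bigr (fun k : 'I_q => \sum_(j < q) (if [&& (k:nat) == (q-u)%N, (j:nat) == (2*q-2*u)%N & (2*q+1 <= 3*u)%N] then ('C(u-1, 2*q-2*u))%:Z else 0))); last first.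
    move=> k _; apply: eq_bigr => j _.
    have hk := ltn_ord k; have hj := ltn_ord j.
    rewrite Lf0; case: ifP => [/andP[h1 h2]|/negbT/nandP h]; last first.
      case: ifP => // /and3P[/eqP ek /eqP ej a]; exfalso; lia.
    rewrite Lf_dvd 1?en //; last lia.
    case: ifP => [/andP[H1 /eqP H2]|/negbT H]; case: ifP => [/and3P[/eqP ek /eqP ej a]|/negbT H'].
    + rewrite ek ej (_ : (q-1-(q-u) = u-1)%N); last lia.
      rewrite -signr_odd (_ : odd (2*q-2*u) = false); last lia.
      by rewrite expr0 mulr1.
    + exfalso; lia.
    + exfalso; lia.
    + done.
  rewrite sum2.
  have vZ : v%:Z = q%:Z - 2 by rewrite vB; lia.
  rewrite (eq_bigr (fun i : 'I_(4*q) => if ((i:nat) == (2*q)%N) && (1 <= u)%N then binz (u%:Z - 1) (2*q%:Z - 2*u%:Z) else 0)); last first.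
    move=> i _; rewrite /Rf; cbv zeta. rewrite tcond; last lia.
    have eA : (v%:Z - q%:Z) * (q%:Z - 1) + (u + v)%:Z = u%:Z - q%:Z by rewrite PoszD vZ; ring.
    rewrite eA.
    have hi := ltn_ord i.
    have [u0|u1] : u = 0%N \/ (0 < u)%N by lia.
      rewrite (@pin (i%:Z - (2*q)%:Z) (q%:Z-1) (u%:Z - q%:Z) (-2)); [|lia|lia].
      rewrite u0 andbF; case: ifP => // /andP[c1 /eqP c2]; exfalso; lia.
    rewrite (@pin (i%:Z - (2*q)%:Z) (q%:Z-1) (u%:Z - q%:Z) (-1)); [|lia|lia].
    rewrite u1 andbT.
    case: ifP => [/andP[c1 /eqP c2]|/negbT H]; case: ifP => [/eqP ei|/negbT H'].
    + rewrite ei; congr binz; rewrite ?PoszD ?PoszM vZ; ring.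
    + exfalso; lia.
    + exfalso; move: H; rewrite ei; lia.
    + done.
  rewrite sum1.
  rewrite (_ : (2*q < 4*q)%N = true) /=; last lia.
  have [u0|u1] : u = 0%N \/ (0 < u)%N by lia.
    rewrite u0 /=; rewrite ifF //; apply/negbTE; lia.
  rewrite u1 /binz.
  rewrite (_ : u%:Z - 1 = (u-1)%N%:Z); last lia.
  rewrite (_ : 2 * q%:Z - 2*u%:Z = (2*q-2*u)%N%:Z); last lia.
  rewrite !absz_nat /=.
  case: (leqP (2*q+1) (3*u)) => h3.
    by rewrite ifT //; apply/and3P; split; lia.
  rewrite ifF; last by apply/negbTE; lia.
  by rewrite bin_small //; lia.
- have hvq : (v * q <= (q - 3) * q)%N by rewrite leq_mul2r; apply/orP; right; lia.
  have e3 : ((q-3)*q + 2*q = q*(q-1))%N.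
    by rewrite -mulnDl mulnC; congr (_ * _)%N; lia.
  rewrite big1; last first.
    move=> k _; rewrite big1 // => j _.
    have hj := ltn_ord j.
    rewrite /Lf (_ : (q*(q-1))%:Z + k%:Z - j%:Z == n%:Z = false) ?andbF //.
    apply/negbTE/eqP; lia.
  rewrite big1 // => i _; rewrite /Rf; cbv zeta. rewrite tcond; last lia.
  case: ifP => // /and3P[c1 c2 c3]; exfalso.
  have hA : (v%:Z - q%:Z) * (q%:Z - 1) <= -3 * (q%:Z - 1) by apply: ler_wpM2r; lia.
  have hs : 0 <= (i%:Z - (2*q)%:Z) * (q%:Z - 1) by apply: mulr_ge0; lia.
  lia.
Qed.
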